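(* Let $0\le\sigma<1$ and $f\colon[0,1]\to\mathbb R$ with $f_\sigma(x)=f(x)/x^\sigma$ integrable on $[0,1]$, and let $\bar f_\sigma=f_\sigma-\int_0^1f_\sigma(t)dt$. Let $(\varpi(n))_{n\ge1}$ be positive reals such that $\sum_{n\ge1}1/\varpi(n)$ converges, and put $\rho(d)=\sum_{n\ge d}1/\varpi(n)$. Assume $$\sum_{d\ge1}d^{1-2\sigma}\rho(d)\,|R_{\bar f_\sigma}(d)|<\infty.$$ Then $\sum_{n\ge1}\frac{|\Theta_{n,\sigma}(f)|}{\varpi(n)}<\infty$, where $\Theta_{n,\sigma}(f)=S_{n,\sigma}(f)-\big(\int_0^1f_\sigma(t)dt\big)\sum_{1\le\ell\le n}\ell^{1-2\sigma}$.
   Context: $S_{n,\sigma}(f)=\sum_{1\le k\le\ell\le n}\frac{1}{(k\ell)^\sigma}f\big(\frac k\ell\big)$. For a function $h$ on $(0,1]$, $R_h(d)=\frac1d\sum_{k=1}^d h(k/d)$. *)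

(* Defs.v *)
From HB Require Import structures.
From mathcomp Require Import all_boot all_order all_algebra.
From mathcomp Require Import all_classical all_reals all_analysis.
Set Implicit Arguments. Unset Strict Implicit. Unset Printing Implicit Defensive.
Import Order.TTheory GRing.Theory Num.Theory.
Import numFieldNormedType.Exports.
Local Open Scope ring_scope.
Local Open Scope classical_set_scope.

Definition fsig {R : realType} (sigma : R) (f : R -> R) (x : R) : R :=
  f x / x `^ sigma.

Definition Ifsig {R : realType} (sigma : R) (f : R -> R) : R :=
  Rintegral lebesgue_measure `[0, 1] (fsig sigma f).

Definition fbar {R : realType} (sigma : R) (f : R -> R) (x : R) : R :=
  fsig sigma f x - Ifsig sigma f.

Definition Rh {R : realType} (h : R -> R) (d : nat) : R :=
  d%:R^-1 * \sum_(1 <= k < d.+1) h (k%:R / d%:R).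

Definition Ssum {R : realType} (sigma : R) (f : R -> R) (n : nat) : R :=
  \sum_(1 <= l < n.+1) \sum_(1 <= k < l.+1)
     ((k * l)%:R `^ sigma)^-1 * f (k%:R / l%:R).

Definition Theta {R : realType} (sigma : R) (f : R -> R) (n : nat) : R :=
  Ssum sigma f n - Ifsig sigma f * \sum_(1 <= l < n.+1) l%:R `^ (1 - 2 * sigma).

Definition rho {R : realType} (varpi : nat -> R) (d : nat) : R :=
  limn (fun N => \sum_(d <= n < N) (varpi n)^-1).

(* Main.v *)
Require Import Defs.
From mathcomp Require Import all_boot all_order all_algebra.
From mathcomp Require Import all_classical all_reals all_analysis.
From mathcomp Require Import ring lra.
Import Order.TTheory GRing.Theory Num.Theory.
Import numFieldNormedType.Exports.
Local Open Scope ring_scope.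
Local Open Scope classical_set_scope.
Lemma term_id (R : realType) (s x : R) (k l : nat) : (0<k)%N -> (0<l)%N ->
  ((k * l)%:R `^ s)^-1 * x = l%:R `^ (1-2*s) * (l%:R^-1 * (x / (k%:R/l%:R) `^ s)).
Proof.
move=> k0 l0.
have K0 : (0:R) < k%:R by rewrite ltr0n.
have L0 : (0:R) < l%:R by rewrite ltr0n.
have Ks := powR_gt0 s K0. have Ls := powR_gt0 s L0.
rewrite natrM powRM ?ler0n // powRM ?invr_ge0 ?ler0n //.
have -> : (l%:R^-1 : R) `^ s = (l%:R `^ s)^-1.
  by rewrite -powR_inv1 ?ltW // -powRrM mulN1r powRN.
have -> : (l%:R : R) `^ (1 - 2*s) = l%:R / (l%:R `^ s * l%:R `^ s).
  have e : (l%:R : R) `^ (1 - 2*s) * (l%:R `^ s * l%:R `^ s) = l%:R.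
    have Lne : (l%:R : R) != 0 by rewrite gt_eqF.
    rewrite -powRD; last by rewrite Lne implybT.
    rewrite -powRD; last by rewrite Lne implybT.
    rewrite (_ : 1 - 2 * s + (s + s) = 1); last by ring.
    exact: powRr1 (ltW L0).
  move: e Ls; set a := l%:R `^ (1 - 2*s); set b := l%:R `^ s => e Ls.
  rewrite -[X in _ = X / _]e; field. by rewrite gt_eqF.
field. by rewrite (gt_eqF Ls) (gt_eqF Ks) (gt_eqF L0).
Qed.

Lemma theta_eq (R : realType) (s : R) f n :
  Theta s f n = \sum_(1 <= l < n.+1) l%:R `^ (1-2*s) * Rh (fbar s f) l.
Proof.
rewrite /Theta /Ssum mulr_sumr -sumrB; apply: eq_big_nat => l /andP[l1 _].
rewrite /Rh /fbar sumrB sumr_const_nat subn1 /=.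
under eq_big_nat => k /andP[k1 _] do rewrite (@term_id R s (f (k%:R/l%:R)) k l k1 l1).
rewrite -mulr_sumr -mulr_sumr /fsig.
have L0 : (l%:R : R) != 0 by rewrite pnatr_eq0 -lt0n.
rewrite -mulr_natr; field. by rewrite pnatr_eq0 -lt0n.
Qed.

Lemma theta_le (R : realType) (s : R) f n :
  `|Theta s f n| <= \sum_(1 <= l < n.+1) l%:R `^ (1-2*s) * `|Rh (fbar s f) l|.
Proof.
rewrite theta_eq; apply: le_trans (ler_norm_sum _ _ _) _.
by apply: ler_sum => l _; rewrite normrM ger0_norm ?powR_ge0.
Qed.

Lemma exch (R : realType) (b w : nat -> R) N :
  \sum_(0 <= k < N) (\sum_(1 <= l < k.+2) b l) * w k.+1 =
  \sum_(1 <= l < N.+1) b l * \sum_(l <= m < N.+1) w m.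
Proof.
elim: N => [|N IH]; first by rewrite !big_geq.
rewrite big_nat_recr //= IH.
rewrite [RHS](eq_big_nat _ _ (F2 := fun l => b l * \sum_(l <= m < N.+1) w m + b l * w N.+1)); last first.
  by move=> l /andP[_ lN]; rewrite big_nat_recr //= mulrDr.
rewrite big_split /= -mulr_suml; congr (_ + _).
by rewrite [RHS]big_nat_recr //= [X in _ + _ * X]big_geq // mulr0 addr0.
Qed.

Lemma lowend (R : realType) (w : nat -> R) l m M : (m <= l)%N ->
  (forall n, (m <= n)%N -> 0 <= w n) ->
  \sum_(l <= n < M) w n <= \sum_(m <= n < M) w n.
Proof.
move=> ml w0; have [lM|Ml] := leqP l M.
  rewrite [leRHS](@big_cat_nat _ _ _ l m M xpredT w ml lM) /= lerDr.
  by rewrite big_nat_cond; apply: sumr_ge0 => n /andP[/andP[mn _] _]; exact: w0.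
rewrite big_geq ?(ltnW Ml) //.
by rewrite big_nat_cond; apply: sumr_ge0 => n /andP[/andP[mn _] _]; exact: w0.
Qed.

Theorem proposition5p13 (R : realType) (sigma : R) (f : R -> R)
  (varpi : nat -> R) :
  0 <= sigma -> sigma < 1 ->
  lebesgue_measure.-integrable `[0%R, 1%R] (EFin \o fsig sigma f) ->
  (forall n, (0 < n)%N -> 0 < varpi n) ->
  cvgn (series (fun n => (varpi n.+1)^-1)) ->
  cvgn (series (fun d => (d.+1)%:R `^ (1 - 2 * sigma) * rho varpi d.+1
                        * `|Rh (fbar sigma f) d.+1|)) ->
  cvgn (series (fun n => `|Theta sigma f n.+1| / varpi n.+1)).
Proof.
move=> s0 s1 _ vp cw ch.
set g := (fun d => _) in ch.
have w0 : forall n, (0 < n)%N -> 0 <= (varpi n)^-1.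
  by move=> n n0; rewrite invr_ge0 ltW // vp.
have rhoB : forall l N, (0 < l)%N -> \sum_(l <= n < N) (varpi n)^-1 <= rho varpi l.
  move=> l N l1.
  have nd : nondecreasing_seq (fun N => \sum_(l <= n < N) (varpi n)^-1).
    by apply: nondecreasing_series => n ln _; apply: w0; exact: leq_trans ln.
  rewrite /rho; apply: (nondecreasing_cvgn_le nd).
  apply: nondecreasing_is_cvgn => //.
  exists (limn (series (fun n => (varpi n.+1)^-1))) => _ [M _ <-].
  apply: le_trans (@lowend R (fun n => (varpi n)^-1) l 1 M l1 w0) _.
  have nd1 : nondecreasing_seq (fun N => \sum_(1 <= n < N) (varpi n)^-1).
    by apply: nondecreasing_series => n ln _; apply: w0.
  apply: le_trans (nd1 M M.+1 (leqnSn M)) _.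
  rewrite /= big_add1 /=.
  have := nondecreasing_cvgn_le _ cw M; apply.
  by apply: nondecreasing_series => n _ _; apply: w0.
have rho0 : forall l, (0 < l)%N -> 0 <= rho varpi l.
  by move=> l l1; have := rhoB l 0%N l1; rewrite big_geq.
have g0 : forall d, 0 <= g d.
  by move=> d; rewrite /g mulr_ge0 ?mulr_ge0 ?powR_ge0 ?rho0.
have gB : forall N, series g N <= limn (series g).
  by apply: nondecreasing_cvgn_le => //; apply: nondecreasing_series => n _ _.
apply: nondecreasing_is_cvgn.
  apply: nondecreasing_series => n _ _.
  by rewrite divr_ge0 ?normr_ge0 // ltW // vp.
exists (limn (series g)) => _ [N _ <-].
apply: le_trans (gB N).
rewrite /series /=.
apply: (@le_trans _ _ (\sum_(0 <= k < N)
   (\sum_(1 <= l < k.+2) l%:R `^ (1-2*sigma) * `|Rh (fbar sigma f) l|) * (varpi k.+1)^-1)).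
  apply: ler_sum => k _; apply: ler_wpM2r; first exact: w0.
  exact: theta_le.
rewrite (@exch R (fun l => l%:R `^ (1-2*sigma) * `|Rh (fbar sigma f) l|) (fun m => (varpi m)^-1) N).
apply: (@le_trans _ _ (\sum_(1 <= l < N.+1)
   l%:R `^ (1-2*sigma) * `|Rh (fbar sigma f) l| * rho varpi l)).
  rewrite big_nat_cond [leRHS]big_nat_cond.
  apply: ler_sum => l /andP[/andP[l1 _] _]; apply: ler_wpM2l.
    by rewrite mulr_ge0 ?powR_ge0.
  exact: rhoB.
rewrite big_add1 /=; apply: ler_sum => d _.
by rewrite /g mulrAC.
Qed.
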